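(* Let $A \in \mathbb{R}^{n\times d_1}$ and $B \in \mathbb{R}^{n\times d_2}$, and let $M = [A \;\; B] \in \mathbb{R}^{n\times(d_1+d_2)}$ be their horizontal concatenation. For a real matrix $C$ with $k$ columns write $\sigma_{\max}(C) = \max_{z\in\mathbb{R}^k,\ \|z\|=1}\|Cz\|$ and $\sigma_{\min}(C) = \min_{z\in\mathbb{R}^k,\ \|z\|=1}\|Cz\|$ (Euclidean norms), and, when $\sigma_{\min}(C)>0$, $\kappa(C) = \sigma_{\max}(C)/\sigma_{\min}(C)$. Set $$s_{\max} = \max\{\sigma_{\max}(A),\sigma_{\max}(B)\},\qquad s_{\min} = \min\{\sigma_{\min}(A),\sigma_{\min}(B)\},$$ $$\rho = \|A^\top B\|_2,\qquad \tau = \frac{\max\{\sigma_{\max}(A),\sigma_{\max}(B)\}}{\min\{\sigma_{\max}(A),\sigma_{\max}(B)\}},\qquad \kappa_{\max} = \max\{\kappa(A),\kappa(B)\}.$$ Assume $\rho < s_{\min}^2$. Then $\sigma_{\max}(M)^2 \le s_{\max}^2 + \rho$, $\sigma_{\min}(M)^2 \ge s_{\min}^2 - \rho$, and $$\kappa(M) \;\le\; \sqrt{\frac{s_{\max}^2+\rho}{s_{\min}^2-\rho}} \;\le\; \sqrt{\frac{1+\rho/s_{\max}^2}{1-\rho/s_{\min}^2}}\cdot\frac{s_{\max}}{s_{\min}} \;\le\; \tau\sqrt{\frac{1+\rho/s_{\max}^2}{1-\rho/s_{\min}^2}}\;\kappa_{\max}.$$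
   Context: $\|\cdot\|_2$ denotes the spectral (operator 2-) norm. $\sigma_{\max}$ and $\sigma_{\min}$ are the largest and smallest singular values in the sense defined in the claim (the minimum of $\|Cz\|$ over unit vectors $z$ in the column space dimension), and $\kappa$ is the spectral condition number. *)

(* Defs.v *)
From HB Require Import structures.
From mathcomp Require Import all_boot all_order all_algebra.
From mathcomp Require Import boolp classical_sets reals.
Set Implicit Arguments. Unset Strict Implicit. Unset Printing Implicit Defensive.
Import Order.TTheory GRing.Theory Num.Theory.
Local Open Scope classical_set_scope.
Local Open Scope ring_scope.

Definition vnorm (R : realType) (k : nat) (z : 'cV[R]_k) : R :=
  Num.sqrt (\sum_(i < k) (z i 0) ^+ 2).

Definition sigma_max (R : realType) (n k : nat) (C : 'M[R]_(n, k)) : R :=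
  sup [set vnorm (C *m z) | z in [set z : 'cV[R]_k | vnorm z = 1]].

Definition sigma_min (R : realType) (n k : nat) (C : 'M[R]_(n, k)) : R :=
  inf [set vnorm (C *m z) | z in [set z : 'cV[R]_k | vnorm z = 1]].

Definition spec_norm (R : realType) (n k : nat) (C : 'M[R]_(n, k)) : R :=
  sigma_max C.

(* spectral condition number (meaningful when sigma_min C > 0) *)
Definition kappa (R : realType) (n k : nat) (C : 'M[R]_(n, k)) : R :=
  sigma_max C / sigma_min C.

(* Main.v *)
Require Import Defs.
From HB Require Import structures.
From mathcomp Require Import all_boot all_order all_algebra.
From mathcomp Require Import boolp classical_sets reals.
From mathcomp Require Import ring lra.
Import Order.TTheory GRing.Theory Num.Theory.
Local Open Scope classical_set_scope.
Local Open Scope ring_scope.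

Set Implicit Arguments. Unset Strict Implicit.
Section Aux.
Variable R : realType.

Definition NN k (z : 'cV[R]_k) : R := \sum_(i < k) (z i 0) ^+ 2.
Definition dot k (u v : 'cV[R]_k) : R := \sum_(i < k) u i 0 * v i 0.

Lemma NN_ge0 k (z : 'cV[R]_k) : 0 <= NN z.
Proof. by apply: sumr_ge0 => i _; apply: sqr_ge0. Qed.

Lemma vnorm_ge0 k (z : 'cV[R]_k) : 0 <= vnorm z.
Proof. exact: sqrtr_ge0. Qed.

Lemma vnorm_sq k (z : 'cV[R]_k) : vnorm z ^+ 2 = NN z.
Proof. by rewrite /vnorm sqr_sqrtr // NN_ge0. Qed.

Lemma vnormE k (z : 'cV[R]_k) : vnorm z = Num.sqrt (NN z).
Proof. by []. Qed.

Lemma NN_eq0 k (z : 'cV[R]_k) : NN z = 0 -> z = 0.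
Proof.
move=> h; apply/matrixP => i j; rewrite (ord1 j) mxE.
have := psumr_eq0P (fun i _ => sqr_ge0 (z i 0)) h (i := i) isT.
by move/eqP; rewrite sqrf_eq0 => /eqP.
Qed.

Lemma NN0 k : NN (0 : 'cV[R]_k) = 0.
Proof. rewrite /NN big1 // => i _; by rewrite mxE expr2 mulr0. Qed.

Lemma NNZ k a (z : 'cV[R]_k) : NN (a *: z) = a ^+ 2 * NN z.
Proof. by rewrite /NN mulr_sumr; apply: eq_bigr => i _; rewrite mxE exprMn. Qed.

Lemma NND k (u v : 'cV[R]_k) : NN (u + v) = NN u + NN v + 2 * dot u v.
Proof.
rewrite /NN /dot mulr_sumr -!big_split /=; apply: eq_bigr => i _.
by rewrite mxE; ring.
Qed.

Lemma dotE k (u v : 'cV[R]_k) : dot u v = (u^T *m v) 0 0.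
Proof. by rewrite /dot mxE; apply: eq_bigr => i _; rewrite mxE. Qed.

Lemma NN_col k1 k2 (x : 'cV[R]_k1) (y : 'cV[R]_k2) :
  NN (col_mx x y) = NN x + NN y.
Proof.
by rewrite /NN big_split_ord /=; congr (_ + _); apply: eq_bigr => i _;
  rewrite ?col_mxEu ?col_mxEd.
Qed.

Lemma cross k (x w : 'cV[R]_k) (r ny : R) :
  0 <= r -> NN w <= r ^+ 2 * ny -> `|2 * dot x w| <= r * (NN x + ny).
Proof.
move=> r0 hw; have [r0e|rpos] := eqVneq r 0.
  subst r; have : NN w = 0.
    by apply/le_anti; rewrite NN_ge0 andbT; move: hw; rewrite expr2 !mul0r.
  move/NN_eq0 => ->; rewrite /dot big1 ?mulr0 ?normr0 ?mul0r // => i _.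
  by rewrite mxE mulr0.
have rp : 0 < r by rewrite lt_def rpos r0.
rewrite -(ler_pM2l rp).
have h1 : r * `|2 * dot x w| <= r ^+ 2 * NN x + NN w.
  rewrite normrM (@ger0_norm _ 2) // mulrA /dot.
  apply: (le_trans (ler_wpM2l _ (ler_norm_sum _ _ _))).
    by apply: mulr_ge0 => //; lra.
  rewrite mulr_sumr /NN mulr_sumr -big_split /=; apply: ler_sum => i _.
  rewrite normrM.
  have := sqr_ge0 (r * `|x i 0| - `|w i 0|).
  have e1 : `|x i 0| ^+ 2 = x i 0 ^+ 2 by rewrite real_normK // num_real.
  have e2 : `|w i 0| ^+ 2 = w i 0 ^+ 2 by rewrite real_normK // num_real.
  rewrite -e1 -e2; nra.
have : r * `|2 * dot x w| <= r ^+ 2 * (NN x + ny).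
  apply: (le_trans h1); rewrite mulrDr lerD2l //.
by rewrite expr2 -mulrA.
Qed.


Lemma coord_le1 k (z : 'cV[R]_k) j : NN z = 1 -> z j 0 ^+ 2 <= 1.
Proof.
move=> <-; rewrite /NN (bigD1 j) //= lerDl.
by apply: sumr_ge0 => i _; apply: sqr_ge0.
Qed.

Lemma bounded n k (C : 'M[R]_(n, k)) :
  exists K, forall z, vnorm z = 1 -> vnorm (C *m z) <= K.
Proof.
pose c i := \sum_j `|C i j|.
exists (Num.sqrt (\sum_i c i ^+ 2)) => z hz.
have hN : NN z = 1 by rewrite -vnorm_sq hz expr1n.
rewrite vnormE ler_sqrt; last by apply: sumr_ge0 => i _; apply: sqr_ge0.
apply: ler_sum => i _; rewrite mxE.
have h : `|\sum_j C i j * z j 0| <= c i.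
  apply: (le_trans (ler_norm_sum _ _ _)); apply: ler_sum => j _.
  rewrite normrM; have := coord_le1 j hN.
  have e : `|z j 0| ^+ 2 = z j 0 ^+ 2 by rewrite real_normK // num_real.
  rewrite -e => h1.
  have h2 : `|z j 0| <= 1.
    have := normr_ge0 (z j 0); nra.
  have := normr_ge0 (C i j); nra.
rewrite -real_normK ?num_real //.
have := normr_ge0 (\sum_j C i j * z j 0); nra.
Qed.

Definition SS n k (C : 'M[R]_(n, k)) :=
  [set vnorm (C *m z) | z in [set z : 'cV[R]_k | vnorm z = 1]].

Lemma SS_ub n k (C : 'M[R]_(n, k)) : has_ubound (SS C).
Proof. by have [K hK] := bounded C; exists K => y [z hz <-]; apply: hK. Qed.

Lemma SS_lb n k (C : 'M[R]_(n, k)) : lbound (SS C) 0.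
Proof. by move=> y [z hz <-]; apply: vnorm_ge0. Qed.

Lemma smax_ub n k (C : 'M[R]_(n, k)) z : vnorm z = 1 -> vnorm (C *m z) <= sigma_max C.
Proof. by move=> hz; apply: (ub_le_sup (SS_ub C)); exists z. Qed.

Lemma smin_lb n k (C : 'M[R]_(n, k)) z : vnorm z = 1 -> sigma_min C <= vnorm (C *m z).
Proof.
move=> hz; rewrite /sigma_min -/(SS C).
by apply: (ge_inf (E := SS C)); [exists 0; apply: SS_lb| exists z].
Qed.

Lemma SS_empty n k (C : 'M[R]_(n, k)) : ~ (exists z : 'cV[R]_k, vnorm z = 1) -> SS C = set0.
Proof.
move=> hne; apply/funext => y; apply/propext; split=> // -[z hz _].
by apply: hne; exists z.
Qed.

Lemma smax_ge0 n k (C : 'M[R]_(n, k)) : 0 <= sigma_max C.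
Proof.
case: (pselect (exists z : 'cV[R]_k, vnorm z = 1)) => [[z hz]|hne].
  exact: le_trans (vnorm_ge0 _) (smax_ub C hz).
by rewrite /sigma_max -/(SS C) SS_empty // sup0.
Qed.

Lemma smin_ge0 n k (C : 'M[R]_(n, k)) : 0 <= sigma_min C.
Proof.
case: (pselect (exists z : 'cV[R]_k, vnorm z = 1)) => [[z hz]|hne].
  by apply: lb_le_inf; [exists (vnorm (C *m z)); exists z|apply: SS_lb].
by rewrite /sigma_min -/(SS C) SS_empty // inf0.
Qed.

Lemma normalize k (z : 'cV[R]_k) : z != 0 ->
  let v := vnorm z in 0 < v /\ vnorm (v^-1 *: z) = 1.
Proof.
move=> nz v.
have Npos : 0 < NN z.
  by rewrite lt_def NN_ge0 andbT; apply/eqP => /NN_eq0 h; move: nz; rewrite h eqxx.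
have vpos : 0 < v by rewrite /v vnormE sqrtr_gt0.
split=> //; rewrite vnormE NNZ -vnorm_sq -/v exprVn mulVf ?sqrtr1 //.
by rewrite expf_neq0 // gt_eqF.
Qed.

Lemma opN n k (C : 'M[R]_(n, k)) z : NN (C *m z) <= sigma_max C ^+ 2 * NN z.
Proof.
have [->|nz] := eqVneq z 0.
  by rewrite mulmx0 NN0 NN0 mulr0.
have [vpos hu] := normalize nz.
set v := vnorm z in vpos hu.
have h := smax_ub C hu.
have h0 := vnorm_ge0 (C *m (v^-1 *: z)).
have h2 : NN (C *m (v^-1 *: z)) <= sigma_max C ^+ 2.
  rewrite -vnorm_sq; nra.
move: h2; rewrite -scalemxAr NNZ -(vnorm_sq z) -/v.
have tv : v^-1 * v = 1 by rewrite mulVf // gt_eqF.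
set t := v^-1 in tv *; set N := NN (C *m z) => h3.
have e : N = v ^+ 2 * (t ^+ 2 * N).
  by rewrite mulrA -exprMn (mulrC v) tv expr1n mul1r.
rewrite {1}e [sigma_max C ^+ 2 * _]mulrC; apply: ler_wpM2l => //; exact: sqr_ge0.
Qed.

Lemma opN_min n k (C : 'M[R]_(n, k)) z : sigma_min C ^+ 2 * NN z <= NN (C *m z).
Proof.
have [->|nz] := eqVneq z 0.
  by rewrite mulmx0 !NN0 mulr0.
have [vpos hu] := normalize nz.
set v := vnorm z in vpos hu.
have h := smin_lb C hu.
have h0 := smin_ge0 C.
have h2 : sigma_min C ^+ 2 <= NN (C *m (v^-1 *: z)).
  rewrite -vnorm_sq; nra.
move: h2; rewrite -scalemxAr NNZ -(vnorm_sq z) -/v.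
have tv : v^-1 * v = 1 by rewrite mulVf // gt_eqF.
set t := v^-1 in tv *; set N := NN (C *m z) => h3.
have e : N = v ^+ 2 * (t ^+ 2 * N).
  by rewrite mulrA -exprMn (mulrC v) tv expr1n mul1r.
rewrite [X in _ <= X]e [sigma_min C ^+ 2 * _]mulrC; apply: ler_wpM2l => //; exact: sqr_ge0.
Qed.


Lemma smin_pos_ex n k (C : 'M[R]_(n, k)) : 0 < sigma_min C -> exists z : 'cV[R]_k, vnorm z = 1.
Proof.
move=> h; case: (pselect (exists z : 'cV[R]_k, vnorm z = 1)) => // hne.
by move: h; rewrite /sigma_min -/(SS C) SS_empty // inf0 ltxx.
Qed.

Lemma Mbounds n d1 d2 (A : 'M[R]_(n, d1)) (B : 'M[R]_(n, d2)) z :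
  let x := usubmx z in let y := dsubmx z in
  [/\ NN (row_mx A B *m z) = NN (A *m x) + NN (B *m y) + 2 * dot x ((A^T *m B) *m y),
      NN z = NN x + NN y &
      `|2 * dot x ((A^T *m B) *m y)| <= sigma_max (A^T *m B) * (NN x + NN y)].
Proof.
move=> x y.
have ez : z = col_mx x y by rewrite vsubmxK.
split.
- rewrite {1}ez mul_row_col NND; congr (_ + _ * _).
  by rewrite !dotE trmx_mul !mulmxA.
- by rewrite {1}ez NN_col.
- apply: cross; first exact: smax_ge0.
  exact: opN.
Qed.

End Aux.

Unset Implicit Arguments.
Set Strict Implicit.

Theorem mainTheorem1 (R : realType) (n d1 d2 : nat)
    (A : 'M[R]_(n, d1)) (B : 'M[R]_(n, d2)) :
  let M := row_mx A B in
  let smax := Num.max (sigma_max A) (sigma_max B) in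
  let smin := Num.min (sigma_min A) (sigma_min B) in
  let rho := spec_norm (A^T *m B) in
  let tau := Num.max (sigma_max A) (sigma_max B) /
             Num.min (sigma_max A) (sigma_max B) in
  let kmax := Num.max (kappa A) (kappa B) in
  rho < smin ^+ 2 ->
  [/\ sigma_max M ^+ 2 <= smax ^+ 2 + rho,
      sigma_min M ^+ 2 >= smin ^+ 2 - rho,
      kappa M <= Num.sqrt ((smax ^+ 2 + rho) / (smin ^+ 2 - rho)),
      Num.sqrt ((smax ^+ 2 + rho) / (smin ^+ 2 - rho))
        <= Num.sqrt ((1 + rho / smax ^+ 2) / (1 - rho / smin ^+ 2)) * (smax / smin)
    & Num.sqrt ((1 + rho / smax ^+ 2) / (1 - rho / smin ^+ 2)) * (smax / smin)
        <= tau * Num.sqrt ((1 + rho / smax ^+ 2) / (1 - rho / smin ^+ 2)) * kmax].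
Proof.
move=> M smax smin rho tau kmax hrho.
have rho0 : 0 <= rho by apply: smax_ge0.
have mA0 := smin_ge0 A; have mB0 := smin_ge0 B.
have sA0 := smax_ge0 A; have sB0 := smax_ge0 B.
have smin0 : 0 <= smin by rewrite /smin le_min mA0 mB0.
have sminp : 0 < smin by rewrite lt_def smin0 andbT; apply/eqP => h; move: hrho; rewrite h; lra.
have mAp : 0 < sigma_min A by apply: lt_le_trans sminp _; rewrite /smin ge_min lexx.
have mBp : 0 < sigma_min B by apply: lt_le_trans sminp _; rewrite /smin ge_min lexx orbT.
have [xA hxA] := smin_pos_ex mAp.
have [xB hxB] := smin_pos_ex mBp.
have mAsA : sigma_min A <= sigma_max A := le_trans (smin_lb A hxA) (smax_ub A hxA).
have mBsB : sigma_min B <= sigma_max B := le_trans (smin_lb B hxB) (smax_ub B hxB).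
have sAm : sigma_max A <= smax by rewrite /smax le_max lexx.
have sBm : sigma_max B <= smax by rewrite /smax le_max lexx orbT.
have mAm : smin <= sigma_min A by rewrite /smin ge_min lexx.
have mBm : smin <= sigma_min B by rewrite /smin ge_min lexx orbT.
have smaxp : 0 < smax by apply: lt_le_trans mAp (le_trans mAsA sAm).
have key : forall z : 'cV[R]_(d1 + d2), NN z = 1 ->
    smin ^+ 2 - rho <= NN (M *m z) <= smax ^+ 2 + rho.
  move=> z hz.
  have [e1 e2 e3] := Mbounds A B z.
  set x := usubmx z in e1 e2 e3; set y := dsubmx z in e1 e2 e3.
  rewrite /M e1; move: e3; rewrite -/rho -e2 hz mulr1 ler_norml => /andP[c1 c2].
  have u1 := opN A x; have u2 := opN B y.
  have l1 := opN_min A x; have l2 := opN_min B y.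
  have nx := NN_ge0 x; have ny := NN_ge0 y.
  have q1 : sigma_max A ^+ 2 * NN x <= smax ^+ 2 * NN x.
    by apply: ler_wpM2r => //; nra.
  have q2 : sigma_max B ^+ 2 * NN y <= smax ^+ 2 * NN y.
    by apply: ler_wpM2r => //; nra.
  have q3 : smin ^+ 2 * NN x <= sigma_min A ^+ 2 * NN x.
    by apply: ler_wpM2r => //; nra.
  have q4 : smin ^+ 2 * NN y <= sigma_min B ^+ 2 * NN y.
    by apply: ler_wpM2r => //; nra.
  have hz' : NN x + NN y = 1 by rewrite -e2.
  have f1 : smin ^+ 2 * NN x + smin ^+ 2 * NN y = smin ^+ 2 by rewrite -mulrDr hz' mulr1.
  have f2 : smax ^+ 2 * NN x + smax ^+ 2 * NN y = smax ^+ 2 by rewrite -mulrDr hz' mulr1.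
  have er : sigma_max (A^T *m B) = rho by []. rewrite er in c1 c2.
  apply/andP; split; lra.
have zM : vnorm (col_mx xA (0 : 'cV[R]_d2)) = 1.
  by rewrite vnormE NN_col NN0 addr0 -vnorm_sq hxA expr1n sqrtr1.
set a := smax ^+ 2 + rho; set b := smin ^+ 2 - rho.
have a0 : 0 <= a by rewrite /a; have := sqr_ge0 smax; lra.
have bp : 0 < b by rewrite /b; lra.
have hmax : sigma_max M <= Num.sqrt a.
  rewrite /sigma_max; apply: ge_sup; first by exists (vnorm (M *m col_mx xA 0)); exists (col_mx xA 0).
  move=> _ [z hz <-]; rewrite vnormE ler_sqrt //.
  have := key z; rewrite -vnorm_sq hz expr1n => /(_ erefl) /andP[] //.
have hmin : Num.sqrt b <= sigma_min M.
  rewrite /sigma_min; apply: lb_le_inf; first by exists (vnorm (M *m col_mx xA 0)); exists (col_mx xA 0).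
  move=> _ [z hz <-]; rewrite vnormE ler_sqrt; last by apply: NN_ge0.
  have := key z; rewrite -vnorm_sq hz expr1n => /(_ erefl) /andP[] //.
have sMmax0 := smax_ge0 M.
have sqa := sqr_sqrtr a0.
have sqb := sqr_sqrtr (ltW bp).
have sqa0 := sqrtr_ge0 a; have sqbp : 0 < Num.sqrt b by rewrite sqrtr_gt0.
have sMminp : 0 < sigma_min M := lt_le_trans sqbp hmin.
split.
- rewrite -sqa; nra.
- rewrite -sqb; nra.
- rewrite /kappa sqrtrM // sqrtrV ?(ltW bp) //.
  apply: ler_pM => //; first by rewrite invr_ge0 ltW.
  by rewrite lef_pV2 ?posrE.
- have q0 : 0 <= smax / smin by rewrite divr_ge0 // ltW.
  rewrite -[smax / smin]ger0_norm // -sqrtr_sqr [X in _ <= X]mulrC -sqrtrM ?sqr_ge0 //.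
  rewrite le_eqVlt; apply/orP; left; apply/eqP; congr Num.sqrt.
  rewrite /a /b; field.
  by rewrite !gt_eqF.
- have mu0 : 0 < Num.min (sigma_max A) (sigma_max B).
    by rewrite lt_min (lt_le_trans mAp mAsA) (lt_le_trans mBp mBsB).
  rewrite -mulrA [X in _ <= X]mulrC -mulrA; apply: ler_wpM2l; first exact: sqrtr_ge0.
  rewrite mulrC /tau -/smax.
  set mu := Num.min (sigma_max A) (sigma_max B) in mu0 *.
  have muA : mu <= sigma_max A by rewrite /mu ge_min lexx.
  have muB : mu <= sigma_max B by rewrite /mu ge_min lexx orbT.
  have kA : kappa A <= kmax by rewrite /kmax le_max lexx.
  have kB : kappa B <= kmax by rewrite /kmax le_max lexx orbT.
  have q0 : 0 <= smax / mu by rewrite divr_ge0 // ltW.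
  have [hm|hm] := leP (sigma_min A) (sigma_min B).
    have -> : smin = sigma_min A by rewrite /smin min_l.
    have -> : smax / sigma_min A = smax / mu * (mu / sigma_min A).
      by field; rewrite ?gt_eqF.
    apply: ler_wpM2l => //; apply: le_trans kA; rewrite /kappa.
    by apply: ler_wpM2r => //; rewrite invr_ge0 ltW.
  have -> : smin = sigma_min B by rewrite /smin min_r // ltW.
  have -> : smax / sigma_min B = smax / mu * (mu / sigma_min B).
    by field; rewrite ?gt_eqF.
  apply: ler_wpM2l => //; apply: le_trans kB; rewrite /kappa.
  by apply: ler_wpM2r => //; rewrite invr_ge0 ltW.
Qed.
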